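(* Let $\ell$ be divisible by $4$, $\lambda\in\mathbb{F}_q^*$, and let $\mathcal{Z}=(Z,Z')$ be a perfect colored matching (for $r=2$). Then the family $\{(A_Z(\lambda),S_Z),(A_{Z'}(\lambda),S_{Z'})\}$ satisfies the subspace condition with $r=2$.
   Context: Vectors are row vectors and matrices act on the right ($SM=\{sM:s\in S\}$). Subspace condition for $r,\ell$ ($r\mid\ell$): a family $\{(A_i,S_i)\}_{i=1}^k$ of invertible $\ell\times\ell$ matrices and $(\ell/r)$-dimensional subspaces satisfies it if (i) $S_i+S_iA_i+\dots+S_iA_i^{r-1}=\mathbb{F}_q^\ell$ for all $i$; (ii) $S_iA_j=S_i$ for all $i\ne j$; (iii) every square block submatrix of the $k\times r$ block matrix with $(i,j)$ block $A_i^j$ ($j=0,\dots,r-1$) is invertible. A perfect colored matching for $r=2$ is a pair $\mathcal{Z}=(Z,Z')$ of ordered sequences $Z=(z_0,\dots,z_{\ell/2-1})$, $Z'=(z'_0,\dots,z'_{\ell/2-1})$ of standard unit vectors of $\mathbb{F}_q^\ell$ whose underlying sets partition $\{e_0,\dots,e_{\ell-1}\}$; its edges are $\{z_i,z'_i\}$. $A(\lambda)=\mathrm{diag}(A^+(\lambda),-A^+(\lambda))$, where $A^+(\lambda)$ is the $(\ell/2)\times(\ell/2)$ block diagonal matrix with all $2\times 2$ blocks $\begin{pmatrix}0&\lambda\\ \lambda&0\end{pmatrix}$. $P_Z$ is the $\ell\times\ell$ matrix with rows $z_0,\,z'_0-z_0,\,z_1,\,z'_1-z_1,\dots,z_{\ell/2-1},\,z'_{\ell/2-1}-z_{\ell/2-1}$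 (in this order), and $P_{Z'}$ has rows $z'_0,\,z_0+z'_0,\,z'_1,\,z_1+z'_1,\dots,z'_{\ell/2-1},\,z_{\ell/2-1}+z'_{\ell/2-1}$. Define $A_Z(\lambda)=P_Z^{-1}A(\lambda)P_Z$, $A_{Z'}(\lambda)=P_{Z'}^{-1}A(\lambda)P_{Z'}$, $S_Z=\mathrm{span}\{z_i\}$, $S_{Z'}=\mathrm{span}\{z'_i\}$. *)

(* Defs.v *)
From HB Require Import structures.
From mathcomp Require Import all_boot all_order all_algebra.
Set Implicit Arguments. Unset Strict Implicit. Unset Printing Implicit Defensive.
Import GRing.Theory.
Local Open Scope ring_scope.

(* Row vectors, matrices act on the right; a subspace of F^l is represented
   as the row space of a matrix (mxalgebra conventions, scope %MS). *)

Definition subspace_condition (F : fieldType) (k r l : nat)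
    (A : 'I_k -> 'M[F]_l) (S : 'I_k -> 'M[F]_l) : Prop :=
  [/\ (forall i, A i \in unitmx),
      (forall i, \rank (S i) = (l %/ r)%N),
      (forall i, ((\sum_(j < r) (S i *m A i ^+ j)) == 1%:M)%MS),
      (forall i j, i != j -> (S i *m A j == S i)%MS) &
  (* (iii) every square block submatrix of the k x r block matrix
     with (i,j) block A_i^j is invertible: choose t block rows
     f 0 < ... < f (t-1) and t block columns g 0 < ... < g (t-1). *)
      (forall (t : nat) (f : 'I_t -> 'I_k) (g : 'I_t -> 'I_r),
          {homo f : x y / (x < y)%N} -> {homo g : x y / (x < y)%N} ->
          \mxblock_(a < t, b < t) (A (f a) ^+ (g b)) \in unitmx)].

Definition unitv (F : fieldType) (l : nat) (i : 'I_l) : 'rV[F]_l := delta_mx 0 i.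

(* Perfect colored matching for r = 2: two sequences of unit vectors
   (given by their indices) of length l/2 whose underlying sets partition
   {e_0, ..., e_(l-1)}. *)
Definition perfect_colored_matching (l : nat) (z z' : seq 'I_l) : Prop :=
  [/\ size z = l./2, size z' = l./2,
      [disjoint z & z'] & forall i : 'I_l, (i \in z) || (i \in z')].

(* A^+(lambda): m x m block diagonal with 2x2 blocks [[0, lam],[lam, 0]]
   (blocks on index pairs {2t, 2t+1}); entry formula. *)
Definition Aplus_entry (F : fieldType) (lam : F) (i j : nat) : F :=
  if (i./2 == j./2) && (i != j) then lam else 0.

Definition Aplus (F : fieldType) (m : nat) (lam : F) : 'M[F]_m :=
  \matrix_(i < m, j < m) Aplus_entry lam i j.

Definition Amat (F : fieldType) (l : nat) (lam : F) : 'M[F]_l :=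
  \matrix_(i < l, j < l)
    if ((i < l./2) && (j < l./2))%N then Aplus_entry lam i j
    else if ((l./2 <= i) && (l./2 <= j))%N then - Aplus_entry lam (i - l./2) (j - l./2)
    else 0.

Definition PZ (F : fieldType) (l : nat) (z z' : seq 'I_l) : 'M[F]_l :=
  \matrix_(r < l)
    (if odd r then (map (@unitv F l) z')`_(r./2) - (map (@unitv F l) z)`_(r./2)
     else (map (@unitv F l) z)`_(r./2)).

Definition PZ' (F : fieldType) (l : nat) (z z' : seq 'I_l) : 'M[F]_l :=
  \matrix_(r < l)
    (if odd r then (map (@unitv F l) z)`_(r./2) + (map (@unitv F l) z')`_(r./2)
     else (map (@unitv F l) z')`_(r./2)).

Definition AZ (F : fieldType) (l : nat) (lam : F) (z z' : seq 'I_l) : 'M[F]_l :=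
  invmx (@PZ F l z z') *m Amat l lam *m @PZ F l z z'.

Definition AZ' (F : fieldType) (l : nat) (lam : F) (z z' : seq 'I_l) : 'M[F]_l :=
  invmx (@PZ' F l z z') *m Amat l lam *m @PZ' F l z z'.

(* S for a sequence of indices: the subspace span{e_i : i in s}, as the row
   space of the l x l matrix whose rows are the e_(s_i) (padded with 0). *)
Definition Sspan (F : fieldType) (l : nat) (s : seq 'I_l) : 'M[F]_l :=
  \matrix_(i < l) (map (@unitv F l) s)`_i.

Definition fam2 (T : Type) (x y : T) (i : 'I_2) : T :=
  if val i == 0%N then x else y.

(* Main.v *)
Require Import Defs.
From HB Require Import structures.
From mathcomp Require Import all_boot all_order all_algebra.
From mathcomp Require Import zify.
Set Implicit Arguments. Unset Strict Implicit. Unset Printing Implicit Defensive.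
Import GRing.Theory.
Local Open Scope ring_scope.

Definition cA (F : fieldType) (l : nat) (lam : F) (i : nat) : F :=
  if (i.*2 < l./2)%N then lam else - lam.

Lemma rowA_even (F : fieldType) (l : nat) (lam : F) (i : nat)
  (H0 : (i.*2 < l)%N) (H1 : (i.*2.+1 < l)%N) : (4 %| l)%N ->
  row (Ordinal H0) (Amat l lam) = cA l lam i *: delta_mx 0 (Ordinal H1).
Proof.
move=> H4; apply/rowP => j; rewrite !mxE /Aplus_entry /cA /=.
have -> : (j == Ordinal H1) = (nat_of_ord j == i.*2.+1) by [].
repeat (case: ifP => ?); case: eqP => ?; rewrite /= ?mulr1 ?mulr0 ?oppr0 //; lia.
Qed.

Lemma rowA_odd (F : fieldType) (l : nat) (lam : F) (i : nat)
  (H0 : (i.*2 < l)%N) (H1 : (i.*2.+1 < l)%N) : (4 %| l)%N ->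
  row (Ordinal H1) (Amat l lam) = cA l lam i *: delta_mx 0 (Ordinal H0).
Proof.
move=> H4; apply/rowP => j; rewrite !mxE /Aplus_entry /cA /=.
have -> : (j == Ordinal H0) = (nat_of_ord j == i.*2) by [].
repeat (case: ifP => ?); case: eqP => ?; rewrite /= ?mulr1 ?mulr0 ?oppr0 //; lia.
Qed.
Local Notation dv F k := (@delta_mx F 1 _ 0 k).
Lemma conj_row (F : fieldType) (l : nat) (P M : 'M[F]_l) (k : 'I_l) :
  P \in unitmx -> row k P *m (invmx P *m M *m P) = row k M *m P.
Proof.
move=> Pu; rewrite -row_mul !mulmxA mulmxV // mul1mx row_mul //.
Qed.

Lemma scale_delta (F : fieldType) (l : nat) (P : 'M[F]_l) (k : 'I_l) c :
  (c *: delta_mx 0 k) *m P = c *: row k P.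
Proof. by rewrite -scalemxAl -rowE. Qed.

Lemma nth_unitv (F : fieldType) (l : nat) (s : seq 'I_l) (d : 'I_l) i :
  (i < size s)%N -> (map (@unitv F l) s)`_i = dv F (nth d s i).
Proof. by move=> Hi; rewrite (nth_map d). Qed.

Lemma keyZ (F : fieldType) (l : nat) (lam : F) (z z' : seq 'I_l) (d : 'I_l) i :
  (4 %| l)%N -> size z = l./2 -> size z' = l./2 -> (i < l./2)%N ->
  PZ F z z' \in unitmx ->
  dv F (nth d z i) *m AZ lam z z' =
     cA l lam i *: (dv F (nth d z' i) - dv F (nth d z i)) /\
  dv F (nth d z' i) *m AZ lam z z' = cA l lam i *: dv F (nth d z' i).
Proof.
move=> H4 Hs Hs' Hi Pu.
have H0 : (i.*2 < l)%N by lia.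
have H1 : (i.*2.+1 < l)%N by lia.
have Ea : row (Ordinal H0) (PZ F z z') = dv F (nth d z i).
  by rewrite rowK /= odd_double doubleK (nth_unitv _ d) ?Hs.
have Eb : row (Ordinal H1) (PZ F z z') = dv F (nth d z' i) - dv F (nth d z i).
  rewrite rowK /= odd_double /=.
  have -> : uphalf i.*2 = i by lia.
  by rewrite !(nth_unitv _ d) ?Hs ?Hs'.
have Ka : dv F (nth d z i) *m AZ lam z z' =
     cA l lam i *: (dv F (nth d z' i) - dv F (nth d z i)).
  by rewrite -[in LHS]Ea /AZ conj_row // rowA_even // scale_delta Eb.
have Kb : (dv F (nth d z' i) - dv F (nth d z i)) *m AZ lam z z' =
     cA l lam i *: dv F (nth d z i).
  by rewrite -[in LHS]Eb /AZ conj_row // rowA_odd // scale_delta Ea.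
split => //.
have -> : dv F (nth d z' i) = (dv F (nth d z' i) - dv F (nth d z i)) + dv F (nth d z i) :> 'rV[F]_l
  by rewrite subrK.
by rewrite mulmxDl Ka Kb -scalerDr [in LHS]addrC.
Qed.

Lemma keyZ' (F : fieldType) (l : nat) (lam : F) (z z' : seq 'I_l) (d : 'I_l) i :
  (4 %| l)%N -> size z = l./2 -> size z' = l./2 -> (i < l./2)%N ->
  PZ' F z z' \in unitmx ->
  dv F (nth d z' i) *m AZ' lam z z' =
     cA l lam i *: (dv F (nth d z i) + dv F (nth d z' i)) /\
  dv F (nth d z i) *m AZ' lam z z' = - cA l lam i *: dv F (nth d z i).
Proof.
move=> H4 Hs Hs' Hi Pu.
have H0 : (i.*2 < l)%N by lia.
have H1 : (i.*2.+1 < l)%N by lia.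
have Ea : row (Ordinal H0) (PZ' F z z') = dv F (nth d z' i).
  by rewrite rowK /= odd_double doubleK (nth_unitv _ d) ?Hs'.
have Eb : row (Ordinal H1) (PZ' F z z') = dv F (nth d z i) + dv F (nth d z' i).
  rewrite rowK /= odd_double /=.
  have -> : uphalf i.*2 = i by lia.
  by rewrite !(nth_unitv _ d) ?Hs ?Hs'.
have Ka : dv F (nth d z' i) *m AZ' lam z z' =
     cA l lam i *: (dv F (nth d z i) + dv F (nth d z' i)).
  by rewrite -[in LHS]Ea /AZ' conj_row // rowA_even // scale_delta Eb.
have Kb : (dv F (nth d z i) + dv F (nth d z' i)) *m AZ' lam z z' =
     cA l lam i *: dv F (nth d z' i).
  by rewrite -[in LHS]Eb /AZ' conj_row // rowA_odd // scale_delta Ea.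
split => //.
have -> : dv F (nth d z i) = (dv F (nth d z i) + dv F (nth d z' i)) - dv F (nth d z' i) :> 'rV[F]_l
  by rewrite addrK.
by rewrite mulmxBl Ka Kb addrK scalerDr scaleNr opprD addrCA subrr addr0.
Qed.

Lemma cover_pcm (l : nat) (z z' : seq 'I_l) (k : 'I_l) :
  perfect_colored_matching z z' ->
  (exists2 i, (i < l./2)%N & nth k z i = k) \/
  (exists2 i, (i < l./2)%N & nth k z' i = k).
Proof.
case=> Hs Hs' _ Hc; case/orP: (Hc k) => Hk.
  by left; exists (index k z); rewrite ?nth_index // -Hs index_mem.
by right; exists (index k z'); rewrite ?nth_index // -Hs' index_mem.
Qed.

Lemma full_of (F : fieldType) (l m : nat) (z z' : seq 'I_l) (M : 'M[F]_(m, l)) :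
  perfect_colored_matching z z' ->
  (forall (d : 'I_l) i, (i < l./2)%N ->
     (dv F (nth d z i) <= M)%MS /\ (dv F (nth d z' i) <= M)%MS) ->
  (1%:M <= M)%MS.
Proof.
move=> Hp H; apply/row_subP => k; rewrite row1.
case: (cover_pcm k Hp) => [[i Hi Ek]|[i Hi Ek]].
  by have [+ _] := H k i Hi; rewrite Ek.
by have [_ +] := H k i Hi; rewrite Ek.
Qed.

Lemma unit_of_full (F : fieldType) (l : nat) (M : 'M[F]_l) :
  (1%:M <= M)%MS -> M \in unitmx.
Proof. by rewrite sub1mx row_full_unit. Qed.

Lemma row_pid (F : fieldType) (l r : nat) (i : 'I_l) :
  row i (pid_mx r : 'M[F]_l) = if (i < r)%N then dv F i else 0.
Proof.
apply/rowP => j; rewrite !mxE; case: ifP => Hi; rewrite ?mxE eq_sym //=.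
  by rewrite andbT.
by rewrite andbF.
Qed.

Lemma rank_Sspan (F : fieldType) (l : nat) (s : seq 'I_l) :
  size s = l./2 -> (\rank (Sspan F s) <= l./2)%N.
Proof.
move=> Hs.
have -> : Sspan F s = pid_mx l./2 *m Sspan F s.
  apply/row_matrixP => i; rewrite row_mul row_pid.
  case: ifP => Hi; first by rewrite -rowE.
  rewrite mul0mx rowK nth_default // size_map Hs; lia.
apply: leq_trans (mxrankM_maxl _ _) _.
rewrite rank_pid_mx //; lia.
Qed.

Lemma mxblock_unit_of (F : fieldType) (t l : nat) (M N : 'I_t -> 'I_t -> 'M[F]_l) :
  (forall i k, \sum_j (M i j *m N j k) = if i == k then 1%:M else 0) ->
  \mxblock_(a < t, b < t) M a b \in unitmx.
Proof.
move=> H.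
have E : \mxblock_(a < t, b < t) M a b *m \mxblock_(a < t, b < t) N a b = 1%:M.
  rewrite mul_mxblock.
  transitivity (@mxdiag _ t (fun=> l) (fun=> (1%:M : 'M[F]_l))); last exact: mxdiagZ.
  rewrite /mxdiag; apply: eq_mxblock => i k; rewrite H.
  by case: eqP => // _; rewrite conform_mx_id.
by case: (mulmx1_unit E).
Qed.

Lemma block_unit (F : fieldType) (l : nat) (A0 A1 : 'M[F]_l) :
  A0 \in unitmx -> A1 \in unitmx -> (A1 - A0) \in unitmx ->
  forall (t : nat) (f : 'I_t -> 'I_2) (g : 'I_t -> 'I_2),
    {homo f : x y / (x < y)%N} -> {homo g : x y / (x < y)%N} ->
    \mxblock_(a < t, b < t) (fam2 A0 A1 (f a) ^+ (g b)) \in unitmx.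
Proof.
move=> U0 U1 UD [|[|[|t]]] f g hf hg.
- apply: (@mxblock_unit_of _ _ _ _ (fun _ _ => 0)) => [[]] //.
- have Uf : fam2 A0 A1 (f ord0) ^+ g ord0 \in unitmx.
    case: (f ord0) (g ord0) => [[|[|//]] ?] [[|[|//]] ?] /=;
      by rewrite ?expr0 ?expr1 ?unitmx1.
  apply: (@mxblock_unit_of _ _ _ _ (fun _ _ => invmx (fam2 A0 A1 (f ord0) ^+ g ord0))).
  move=> i k; rewrite big_ord1 !ord1 eqxx.
  by rewrite mulmxV.
- have Hf2 : forall h : 'I_2 -> 'I_2, {homo h : x y / (x < y)%N} -> forall a, h a = a.
    move=> h hh.
    have [h0 h1] : h ord0 = ord0 /\ h (lift ord0 ord0) = lift ord0 ord0.
      have := hh ord0 (lift ord0 ord0) isT.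
      case: (h ord0) (h (lift ord0 ord0)) => [x0 p0] [x1 p1] /= Hx; split; apply/val_inj => /=; rewrite ?/bump /=; lia.
    case=> [[|[|//]] p].
      by rewrite (_ : Ordinal p = ord0) //; apply/val_inj.
    by rewrite (_ : Ordinal p = lift ord0 ord0) //; apply/val_inj.
  have fE := Hf2 f hf; have gE := Hf2 g hg.
  have DE : (A1 - A0) *m invmx (A1 - A0) = 1%:M by rewrite mulmxV.
  move: (invmx (A1 - A0)) DE => E DE.
  apply: (@mxblock_unit_of _ _ _ _ (fun j k => if val j == 0%N then (if val k == 0%N then A1 *m E else - (A0 *m E)) else (if val k == 0%N then - E else E))).
  move=> i k; rewrite !big_ord_recl big_ord0 addr0 !fE !gE.
  case: i k => [[|[|//]] pi] [[|[|//]] pk]; rewrite /fam2 /= ?expr0 ?expr1 ?mul1mx.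
  - by rewrite mulmxN -mulmxBl DE.
  - by rewrite addNr.
  - by rewrite mulmxN subrr.
  - by rewrite addrC -mulmxBl DE.
- have := hf ord0 (lift ord0 ord0) isT.
  have := hf (lift ord0 ord0) (lift ord0 (lift ord0 ord0)) isT.
  move: (f ord0) (f (lift ord0 ord0)) (f (lift ord0 (lift ord0 ord0))) => [? ?] [? ?] [? ?] /=.
  lia.
Qed.

Lemma comb_sub (F : fieldType) (m n l : nat) (M : 'M[F]_(m, l)) (x y : 'M[F]_(n, l)) c1 c2 :
  (x <= M)%MS -> (y <= M)%MS -> ((c1 *: x + c2 *: y)%R <= M)%MS.
Proof. by move=> Hx Hy; rewrite addmx_sub ?scalemx_sub. Qed.

Lemma scaleK (F : fieldType) (m n : nat) (c : F) (v : 'M[F]_(m, n)) :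
  c != 0 -> c^-1 *: (c *: v) = v.
Proof. by move=> Hc; rewrite scalerA mulVf // scale1r. Qed.

Lemma cA_neq0 (F : fieldType) (l : nat) (lam : F) i : lam != 0 -> cA l lam i != 0.
Proof. by move=> H; rewrite /cA; case: ifP; rewrite ?oppr_eq0. Qed.

Lemma row_Sspan (F : fieldType) (l : nat) (s : seq 'I_l) (k : 'I_l) :
  size s = l./2 ->
  row k (Sspan F s) = if (k < l./2)%N then dv F (nth k s k) else 0.
Proof.
move=> Hs; rewrite rowK; case: ifP => Hk; first by rewrite (nth_unitv _ k) ?Hs.
by rewrite nth_default // size_map Hs; lia.
Qed.

Lemma Sspan_sub (F : fieldType) (l : nat) (s : seq 'I_l) (d : 'I_l) i :
  size s = l./2 -> (i < l./2)%N -> (dv F (nth d s i) <= Sspan F s)%MS.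
Proof.
move=> Hs Hi; have Hil : (i < l)%N by lia.
have := row_sub (Ordinal Hil) (Sspan F s); rewrite row_Sspan //= Hi.
by rewrite (set_nth_default d) ?Hs.
Qed.

Lemma PZ_unit (F : fieldType) (l : nat) (z z' : seq 'I_l) :
  (4 %| l)%N -> perfect_colored_matching z z' -> PZ F z z' \in unitmx.
Proof.
move=> H4 Hp; have [Hs Hs' _ _] := Hp.
apply: unit_of_full; apply: (full_of Hp) => d i Hi.
have H0 : (i.*2 < l)%N by lia.
have H1 : (i.*2.+1 < l)%N by lia.
have Ea : row (Ordinal H0) (PZ F z z') = dv F (nth d z i).
  by rewrite rowK /= odd_double doubleK (nth_unitv _ d) ?Hs.
have Eb : row (Ordinal H1) (PZ F z z') = dv F (nth d z' i) - dv F (nth d z i).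
  rewrite rowK /= odd_double /=.
  have -> : uphalf i.*2 = i by lia.
  by rewrite !(nth_unitv _ d) ?Hs ?Hs'.
split; first by rewrite -Ea row_sub.
have -> : dv F (nth d z' i) = row (Ordinal H1) (PZ F z z') + row (Ordinal H0) (PZ F z z')
  by rewrite Ea Eb subrK.
by rewrite addmx_sub ?row_sub.
Qed.

Lemma PZ'_unit (F : fieldType) (l : nat) (z z' : seq 'I_l) :
  (4 %| l)%N -> perfect_colored_matching z z' -> PZ' F z z' \in unitmx.
Proof.
move=> H4 Hp; have [Hs Hs' _ _] := Hp.
apply: unit_of_full; apply: (full_of Hp) => d i Hi.
have H0 : (i.*2 < l)%N by lia.
have H1 : (i.*2.+1 < l)%N by lia.
have Ea : row (Ordinal H0) (PZ' F z z') = dv F (nth d z' i).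
  by rewrite rowK /= odd_double doubleK (nth_unitv _ d) ?Hs'.
have Eb : row (Ordinal H1) (PZ' F z z') = dv F (nth d z i) + dv F (nth d z' i).
  rewrite rowK /= odd_double /=.
  have -> : uphalf i.*2 = i by lia.
  by rewrite !(nth_unitv _ d) ?Hs ?Hs'.
split; last by rewrite -Ea row_sub.
have -> : dv F (nth d z i) = row (Ordinal H1) (PZ' F z z') - row (Ordinal H0) (PZ' F z z')
  by rewrite Ea Eb addrK.
by rewrite addmx_sub ?row_sub // -scaleN1r scalemx_sub ?row_sub.
Qed.

Lemma stable_eq (F : fieldType) (l : nat) (S A : 'M[F]_l) :
  A \in unitmx -> (S *m A <= S)%MS -> (S *m A == S)%MS.
Proof.
move=> Au H; rewrite -(mxrank_leqif_eq H).2.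
by rewrite mxrankMfree ?row_free_unit.
Qed.

Lemma unscale_sub (F : fieldType) (m n l : nat) (M : 'M[F]_(m, l)) (x : 'M[F]_(n, l)) (c : F) :
  c != 0 -> (c *: x <= M)%MS -> (x <= M)%MS.
Proof. by move=> Hc H; rewrite -(scaleK x Hc) scalemx_sub. Qed.

Lemma sum2_eq (F : fieldType) (l : nat) (S A : 'M[F]_l) :
  (\sum_(j < 2) (S *m A ^+ j))%MS = (S + S *m A)%MS.
Proof. by rewrite !big_ord_recl big_ord0 /bump /= expr0 expr1 mulmx1 addsmx0_id. Qed.

Lemma full_of_rf (F : fieldType) (l m : nat) (z z' : seq 'I_l) (M : 'M[F]_(m, l)) :
  perfect_colored_matching z z' ->
  (forall (d : 'I_l) i, (i < l./2)%N ->
     (dv F (nth d z i) <= M)%MS /\ (dv F (nth d z' i) <= M)%MS) ->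
  row_full M.
Proof. by move=> Hp H; rewrite -sub1mx; apply: full_of Hp H. Qed.

Theorem lemma4p4 (F : finFieldType) (l : nat) (lam : F) (z z' : seq 'I_l) :
  (4 %| l)%N -> lam != 0 -> perfect_colored_matching z z' ->
  subspace_condition 2%N
    (fam2 (AZ lam z z') (AZ' lam z z'))
    (fam2 (Sspan F z) (Sspan F z')).
Proof.
move=> H4 Hl Hp; have [Hs Hs' _ _] := Hp.
have PU := PZ_unit F H4 Hp; have PU' := PZ'_unit F H4 Hp.
have KZ := fun d i Hi => @keyZ F l lam z z' d i H4 Hs Hs' Hi PU.
have KZ' := fun d i Hi => @keyZ' F l lam z z' d i H4 Hs Hs' Hi PU'.
have cN := fun i => @cA_neq0 F l lam i Hl.
have UZ : AZ lam z z' \in unitmx.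
  apply: unit_of_full; apply: (full_of Hp) => d i Hi.
  have [Ka Kb] := KZ d i Hi.
  have Ha := submxMl (dv F (nth d z i)) (AZ lam z z').
  have Hb := submxMl (dv F (nth d z' i)) (AZ lam z z').
  rewrite Kb in Hb; rewrite Ka in Ha.
  split; last exact: unscale_sub (cN i) Hb.
  have := comb_sub (cA l lam i)^-1 (- (cA l lam i)^-1) Hb Ha.
  by rewrite scaleNr !scaleK // opprB addrC subrK.
have UZ' : AZ' lam z z' \in unitmx.
  apply: unit_of_full; apply: (full_of Hp) => d i Hi.
  have [Kb Ka] := KZ' d i Hi.
  have Ha := submxMl (dv F (nth d z i)) (AZ' lam z z').
  have Hb := submxMl (dv F (nth d z' i)) (AZ' lam z z').
  rewrite Kb in Hb; rewrite Ka in Ha.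
  have Ha' : (dv F (nth d z i) <= AZ' lam z z')%MS.
    by apply: (unscale_sub _ Ha); rewrite oppr_eq0.
  split => //.
  have := comb_sub (cA l lam i)^-1 (-1) Hb Ha'.
  by rewrite scaleK // scaleN1r addrC addKr.
have UD : AZ' lam z z' - AZ lam z z' \in unitmx.
  apply: unit_of_full; apply: (full_of Hp) => d i Hi.
  have [Ka Kb] := KZ d i Hi; have [Kb' Ka'] := KZ' d i Hi.
  have Ha := submxMl (dv F (nth d z i)) (AZ' lam z z' - AZ lam z z').
  have Hb := submxMl (dv F (nth d z' i)) (AZ' lam z z' - AZ lam z z').
  rewrite mulmxBr Ka Ka' scalerBr opprB ?scaleNr addKr -scaleNr in Ha.
  rewrite mulmxBr Kb Kb' scalerDr addrK in Hb.
  split; first exact: unscale_sub (cN i) Hb.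
  by apply: (unscale_sub _ Ha); rewrite oppr_eq0.
split.
- by case=> [[|[|//]] ?]; rewrite /fam2 /=.
- have Hr := rank_Sspan F Hs; have Hr' := rank_Sspan F Hs'.
  have Hfull : (1%:M <= Sspan F z + Sspan F z')%MS.
    apply: (full_of Hp) => d i Hi; split.
      exact: submx_trans (Sspan_sub F d Hs Hi) (addsmxSl _ _).
    exact: submx_trans (Sspan_sub F d Hs' Hi) (addsmxSr _ _).
  have := mxrankS Hfull; rewrite mxrank1 => H1.
  have H2 := (mxrank_adds_leqif (Sspan F z) (Sspan F z')).1.
  case=> [[|[|//]] ?]; rewrite /fam2 /=; lia.
- case=> [[|[|//]] ?]; rewrite /fam2 /= sum2_eq; apply/andP; (split; [exact: submx1|]).
  + have X := @full_of _ l l z z' (Sspan F z + Sspan F z *m AZ lam z z')%MS Hp.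
    apply: X => d i Hi.
    have [Ka _] := KZ d i Hi.
    have Ha := Sspan_sub F d Hs Hi.
    have HaS := submx_trans Ha (addsmxSl (Sspan F z) (Sspan F z *m AZ lam z z')).
    have HaA := submx_trans (submxMr (AZ lam z z') Ha) (addsmxSr (Sspan F z) (Sspan F z *m AZ lam z z')).
    split => //; rewrite Ka in HaA.
    have := comb_sub 1 (cA l lam i)^-1 HaS HaA.
    by rewrite scale1r scaleK // addrC subrK.
  + have X := @full_of _ l l z z' (Sspan F z' + Sspan F z' *m AZ' lam z z')%MS Hp.
    apply: X => d i Hi.
    have [Kb _] := KZ' d i Hi.
    have Hb := Sspan_sub F d Hs' Hi.
    have HbS := submx_trans Hb (addsmxSl (Sspan F z') (Sspan F z' *m AZ' lam z z')).
    have HbA := submx_trans (submxMr (AZ' lam z z') Hb) (addsmxSr (Sspan F z') (Sspan F z' *m AZ' lam z z')).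
    split => //; rewrite Kb in HbA.
    have := comb_sub (cA l lam i)^-1 (-1) HbA HbS.
    by rewrite scaleK // scaleN1r addrK.
- case=> [[|[|//]] ?] [[|[|//]] ?] //= _; rewrite /fam2 /=;
    apply: stable_eq => //; apply/row_subP => k; rewrite row_mul row_Sspan //;
    (case: ifP => Hk; last by rewrite mul0mx sub0mx).
  + by have [_ Ka] := KZ' k k Hk; rewrite Ka scalemx_sub // (Sspan_sub F k Hs Hk).
  + by have [_ Kb] := KZ k k Hk; rewrite Kb scalemx_sub // (Sspan_sub F k Hs' Hk).
- by move=> t f g hf hg; apply: block_unit.
Qed.
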